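(* Let $\ell\ge 2$, $N\ge 1$ and $D\ge 0$ be integers and let $T=4D\lceil\log_\ell N\rceil+1$. There exists a $T$-$(T,N,D)$-tropical protocol within maximum delay $\ell$.
   Context: Tropical arithmetic on $\mathbb{R}\cup\{\infty\}$: $x\oplus y=\min(x,y)$, $x\odot y=x+y$, with $x\oplus\infty=x$ and $x\odot\infty=\infty$; for a matrix $S$ and vector $\mathbf{x}$, $(S\odot\mathbf{x})_t=\min_j(S_{tj}+x_j)$. An $R$-$(T,N,D)$-tropical protocol consists of $R$ functions $\mathcal{S}^{(1)},\dots,\mathcal{S}^{(R)}$: $S^{(1)}=\mathcal{S}^{(1)}()$ is a fixed matrix, and for $r\ge 2$, $S^{(r)}=\mathcal{S}^{(r)}$ applied to the results $\bigl(S^{(1)};\dots;S^{(r-1)}\bigr)\odot\mathbf{x}$ of all previous rounds (vertical stacking); each $S^{(r)}$ has $N$ columns, entries in $\{0\}\cup\mathbb{N}\cup\{\infty\}$, and a number of rows that may depend on previous results, the total number of rows being at most $T$ for every $\mathbf{x}$; and the final result $\bigl(S^{(1)};\dots;S^{(R)}\bigr)\odot\mathbf{x}$ determines $\mathbf{x}$ uniquely among all $\mathbf{x}\in(\{0\}\cup\mathbb{N}\cup\{\infty\})^N$ with at most $D$ finite entries. It is within maximum delay $\ell$ if all schedule matrices use only entries in $\{0,1,\dots,\ell,\infty\}$. *)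

(* Defs.v *)
From mathcomp Require Import all_boot.
Set Implicit Arguments. Unset Strict Implicit. Unset Printing Implicit Defensive.

(* Tropical numbers {0} ∪ ℕ ∪ {∞}: [Some n] is the finite value n, [None] is ∞. *)
Definition trop := option nat.

Definition tadd (a b : trop) : trop :=
  match a, b with
  | Some m, Some n => Some (minn m n)
  | Some m, None => Some m
  | None, b => b
  end.

Definition tmul (a b : trop) : trop :=
  match a, b with
  | Some m, Some n => Some (m + n)
  | _, _ => None
  end.

Definition trow (N : nat) := {ffun 'I_N -> trop}.
Definition tvec (N : nat) := {ffun 'I_N -> trop}.

Definition row_apply N (s : trow N) (x : tvec N) : trop :=
  \big[tadd/None]_(j < N) tmul (s j) (x j).

(* A protocol is given by its round functions: [S r prev] is the schedule
   matrix (list of rows) of round r+1 (0-indexed r), computed from the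
   vertically stacked results [prev] of all previous rounds. *)
Definition protocol N := nat -> seq trop -> seq (trow N).

Fixpoint run N (S : protocol N) (r : nat) (x : tvec N) : seq trop :=
  match r with
  | 0 => [::]
  | r'.+1 => let prev := run S r' x in
             prev ++ map (fun s => row_apply s x) (S r' prev)
  end.

Definition nfinite N (x : tvec N) : nat := #|[set j | x j != None]|.

Definition is_tropical_protocol (R T N D : nat) (S : protocol N) : Prop :=
  (forall x : tvec N, size (run S R x) <= T) /\
  (forall x y : tvec N, nfinite x <= D -> nfinite y <= D ->
     run S R x = run S R y -> x = y).

Definition within_delay (R N l : nat) (S : protocol N) : Prop :=
  forall (x : tvec N) (r : nat), r < R ->
    forall s, s \in S r (run S r x) ->
      forall j : 'I_N, match s j with Some e => e <= l | None => true end.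

Arguments is_tropical_protocol : clear implicits.
Arguments within_delay : clear implicits.

(* Main.v *)
From HB Require Import structures.
Require Import Defs.
From mathcomp Require Import all_boot.
From Stdlib Require Import ClassicalEpsilon.
Set Implicit Arguments. Unset Strict Implicit. Unset Printing Implicit Defensive.

Lemma tadd_assoc : associative tadd.
Proof. by case=> [a|] [b|] [c|] //=; rewrite minnA. Qed.
Lemma tadd_comm : commutative tadd.
Proof. by case=> [a|] [b|] //=; rewrite minnC. Qed.
Lemma tadd_left_id : left_id None tadd.
Proof. by case. Qed.
HB.instance Definition _ := Monoid.isComLaw.Build trop None tadd tadd_assoc tadd_comm tadd_left_id.

Definition tle (a b : trop) : bool :=
  match a, b with
  | _, None => true
  | None, Some _ => false
  | Some m, Some n => m <= n
  end.

Section Bmin.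
Variable N : nat.
Implicit Types (P : pred 'I_N) (F : 'I_N -> trop).
Definition bmin (P : pred 'I_N) (F : 'I_N -> trop) : trop := \big[tadd/None]_(j | P j) F j.

Lemma tle_tadd a b : tle (tadd a b) a.
Proof. by case: a b => [a|] [b|] //=; rewrite geq_minl. Qed.

Lemma bmin_lb P F j : P j -> tle (bmin P F) (F j).
Proof. by move=> Pj; rewrite /bmin (bigD1 j) //= tle_tadd. Qed.

Lemma bmin_ex P F w : bmin P F = Some w -> exists j, P j /\ F j = Some w.
Proof.
rewrite /bmin; elim/big_rec: _ => [//|i a Pi IH].
case E: (F i) => [b|]; case: a IH => [a|] IH //=.
- rewrite /minn; case: ltnP => _ [Ew]; subst w; [by exists i | exact: IH].
- by move=> [Ew]; subst w; exists i.
Qed.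

Lemma bmin_None P F : bmin P F = None <-> forall j, P j -> F j = None.
Proof.
split.
- move=> E j Pj; have := bmin_lb F Pj; rewrite E; by case: (F j).
- move=> H; rewrite /bmin big1 // => j Pj; exact: H.
Qed.

Lemma bmin_Some P F w :
  (exists j, P j /\ F j = Some w) -> (forall j v, P j -> F j = Some v -> w <= v) ->
  bmin P F = Some w.
Proof.
move=> [j [Pj Fj]] H.
have := bmin_lb F Pj; rewrite Fj.
case E: (bmin P F) => [w'|] //= lew.
have [j' [Pj' Fj']] := bmin_ex E.
by have := H _ _ Pj' Fj' => le'; apply/f_equal/eqP; rewrite eqn_leq lew le'.
Qed.

Lemma bmin_lbS P F w j v : bmin P F = Some w -> P j -> F j = Some v -> w <= v.
Proof. by move=> E Pj Fj; have := bmin_lb F Pj; rewrite E Fj. Qed.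

Lemma bmin_ext P P' F F' : (forall j, P j = P' j) -> (forall j, P j -> F j = F' j) ->
  bmin P F = bmin P' F'.
Proof.
move=> HP HF; rewrite /bmin (eq_bigr F' HF); exact: eq_bigl.
Qed.

Definition qrow (P : pred 'I_N) (d : 'I_N -> nat) : trow N :=
  [ffun j => if P j then Some (d j) else None].

Lemma qrowE P d (x : tvec N) :
  row_apply (qrow P d) x = bmin P (fun j => tmul (Some (d j)) (x j)).
Proof.
rewrite /row_apply /bmin [RHS]big_mkcond.
apply: eq_bigr => j _; rewrite ffunE; by case: (P j).
Qed.

End Bmin.
From mathcomp Require Import zify.
Section Proto.
Variables (N l : nat).

Definition okq (q : trow N) : bool :=
  [forall j, match q j with Some e => e <= l | None => true end].

Fixpoint Good (n : nat) (K : tvec N -> Prop) : Prop :=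
  match n with
  | 0 => forall x y, K x -> K y -> x = y
  | n'.+1 => exists q, okq q /\ forall a, Good n' (fun x => K x /\ row_apply q x = a)
  end.

Definition dummy : trow N := [ffun _ => None].
Lemma okq_dummy : okq dummy.
Proof. by apply/forallP => j; rewrite ffunE. Qed.

Lemma Good_mono n (K K' : tvec N -> Prop) :
  (forall x, K' x -> K x) -> Good n K -> Good n K'.
Proof.
elim: n K K' => [|n IH] K K' H /=.
  by move=> G x y /H Kx /H Ky; exact: G.
move=> [q [oq G]]; exists q; split => // a.
by apply: IH (G a) => x [/H Kx Ex].
Qed.

Lemma Good_uniq n (K : tvec N -> Prop) :
  (forall x y, K x -> K y -> x = y) -> Good n K.
Proof.
elim: n K => [|n IH] K H //=.
exists dummy; split; first exact: okq_dummy.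
by move=> a; apply: IH => x y [Kx _] [Ky _]; exact: H.
Qed.

Definition pick (K : tvec N -> Prop) (n : nat) : trow N :=
  let q := epsilon (inhabits dummy)
             (fun q => okq q /\ forall a, Good n (fun x => K x /\ row_apply q x = a)) in
  if okq q then q else dummy.

Lemma pick_ok K n : okq (pick K n).
Proof. rewrite /pick; case: ifP => // _; exact: okq_dummy. Qed.

Lemma pick_spec K n : Good n.+1 K ->
  forall a, Good n (fun x => K x /\ row_apply (pick K n) x = a).
Proof.
move=> G; have := epsilon_spec (inhabits dummy)
  (fun q => okq q /\ forall a, Good n (fun x => K x /\ row_apply q x = a)) G.
rewrite /pick; set q := epsilon _ _; by move=> [-> H].
Qed.

Fixpoint KS (K : tvec N -> Prop) (n : nat) (ans : seq trop) : tvec N -> Prop :=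
  match ans with
  | [::] => K
  | a :: ans' => KS (fun x => K x /\ row_apply (pick K n.-1) x = a) n.-1 ans'
  end.

Lemma KS_rcons K n s a :
  KS K n (rcons s a) =
  (fun x => KS K n s x /\ row_apply (pick (KS K n s) (n - size s).-1) x = a).
Proof.
elim: s K n => [|b s IH] K n /=; first by rewrite subn0.
rewrite IH; congr (fun x => _ /\ row_apply (pick _ _) x = a).
have -> : n.-1 - size s = n - (size s).+1 by lia.
by [].
Qed.

Variables (K0 : tvec N -> Prop) (T : nat).

Definition protoS : protocol N :=
  fun r prev => [:: pick (KS K0 T prev) (T - size prev).-1].

Lemma run_size r x : size (run protoS r x) = r.
Proof. by elim: r => //= r IH; rewrite size_cat IH addn1. Qed.

Lemma run_succ r x : run protoS r.+1 x =
  rcons (run protoS r x) (row_apply (pick (KS K0 T (run protoS r x)) (T - r).-1) x).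
Proof. by rewrite /= -cats1 /protoS run_size. Qed.

Lemma run_inv r x : r <= T -> K0 x -> Good T K0 ->
  KS K0 T (run protoS r x) x /\ Good (T - r) (KS K0 T (run protoS r x)).
Proof.
move=> + K0x G; elim: r => [|r IH] lerT; first by rewrite subn0.
have [Hx Hg] := IH (ltnW lerT).
rewrite run_succ KS_rcons run_size.
have E : T - r = (T - r).-1.+1 by rewrite prednK // subn_gt0.
rewrite E in Hg.
split; first by split.
have := pick_spec Hg (row_apply (pick (KS K0 T (run protoS r x)) (T - r).-1) x).
by rewrite subnS.
Qed.


Lemma proto_main (D : nat) : K0 = (fun x => nfinite x <= D) -> Good T K0 ->
  is_tropical_protocol T T N D protoS /\ within_delay T N l protoS.
Proof.
move=> EK G; split; first split.
- by move=> x; rewrite run_size.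
- move=> x y Hx Hy Exy.
  have Kx : K0 x by rewrite EK.
  have Ky : K0 y by rewrite EK.
  have [Ix Gx] := run_inv (leqnn T) Kx G.
  have [Iy _] := run_inv (leqnn T) Ky G.
  rewrite subnn in Gx; apply: Gx => //; by rewrite Exy.
- move=> x r _ s; rewrite /protoS inE => /eqP -> j.
  by have /forallP := pick_ok (KS K0 T (run protoS r x)) (T - size (run protoS r x)).-1; apply.
Qed.

End Proto.

Lemma index_take (T : eqType) (k : T) n (s : seq T) :
  k \in take n s -> index k (take n s) = index k s.
Proof.
elim: s n => [|a s IH] [|n] //= H.
case: eqP => // ne; congr _.+1; apply: IH.
by move: H; rewrite inE; case: eqP => // E; case: ne.
Qed.

Lemma in_drop_uniq (T : eqType) (k : T) n (s : seq T) :
  uniq s -> k \in s -> (k \in drop n s) = (n <= index k s).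
Proof.
move=> us ks.
have : uniq (take n s ++ drop n s) by rewrite cat_take_drop.
rewrite cat_uniq => /and3P [_ dis _].
have : k \in take n s ++ drop n s by rewrite cat_take_drop.
rewrite mem_cat in_take //.
case: ltnP => /= H kd //.
apply/negP => kd'; apply: (negP dis); apply/hasP; exists k => //.
by rewrite in_take.
Qed.

Lemma nth_eq_uniq (k : nat) g (s : seq nat) :
  uniq s -> k \in s -> g < size s -> (k == nth 0 s g) = (index k s == g).
Proof.
move=> us ks gs; apply/eqP/eqP => [->|<-]; first exact: index_uniq.
by rewrite nth_index.
Qed.

Lemma decomp_s (T : Type) (x0 : T) g (s : seq T) : g < size s ->
  s = take g s ++ nth x0 s g :: drop g.+1 s.
Proof. by move=> gs; rewrite -(drop_nth x0 gs) cat_take_drop. Qed.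

Section Alg.
Variables (N l : nat).
Hypothesis hl : 1 < l.
Implicit Types (x : tvec N) (s : seq nat).

Definition bi h (j : 'I_N) := j %/ l ^ h.
Definition inS h (s : seq nat) (j : 'I_N) : bool := bi h j \in s.
Definition dix h (s : seq nat) (j : 'I_N) := index (bi h j) s.
Definition minS h s (x : tvec N) : trop := bmin (inS h s) (fun j => x j).
Definition digS h s (x : tvec N) : trop :=
  bmin (inS h s) (fun j => tmul (Some (dix h s j)) (x j)).
Definition zrow h s : trow N := qrow (inS h s) (fun _ => 0).
Definition drow h s : trow N := qrow (inS h s) (dix h s).

Lemma zrowE h s x : row_apply (zrow h s) x = minS h s x.
Proof. by rewrite qrowE; apply: bmin_ext => // j _; case: (x j). Qed.
Lemma drowE h s x : row_apply (drow h s) x = digS h s x.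
Proof. by rewrite qrowE. Qed.

Lemma okq_zrow h s : okq l (zrow h s).
Proof. by apply/forallP => j; rewrite ffunE; case: ifP. Qed.
Lemma okq_drow h s : size s <= l -> okq l (drow h s).
Proof.
move=> sl; apply/forallP => j; rewrite ffunE; case: ifP => // H.
by apply: leq_trans sl; apply: ltnW; rewrite /dix index_mem.
Qed.

Definition sX (s : seq nat) g := take g s ++ drop g.+1 s.

Lemma inS_take h s g j : inS h (take g s) j = inS h s j && (dix h s j < g).
Proof.
rewrite /inS /dix; case E: (bi h j \in s); last first.
  by apply/negP => /mem_take; rewrite E.
by rewrite in_take.
Qed.

Lemma inS_drop h s g j : uniq s -> inS h (drop g s) j = inS h s j && (g <= dix h s j).
Proof.
move=> us; rewrite /inS /dix; case E: (bi h j \in s); last first.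
  by apply/negP => /mem_drop; rewrite E.
by rewrite in_drop_uniq.
Qed.

Lemma inS_nth h s g j : uniq s -> g < size s ->
  inS h [:: nth 0 s g] j = inS h s j && (dix h s j == g).
Proof.
move=> us gs; rewrite /inS /dix inE; case E: (bi h j \in s).
  by rewrite nth_eq_uniq.
apply/negP => /eqP Eb; move: E; rewrite Eb mem_nth //.
Qed.

Lemma inS_sX h s g j : uniq s -> inS h (sX s g) j = inS h s j && (dix h s j != g).
Proof.
move=> us; rewrite /sX {1}/inS mem_cat.
rewrite -[_ \in take _ _]/(inS h (take g s) j) -[_ \in drop _ _]/(inS h (drop g.+1 s) j).
rewrite inS_take inS_drop //.
by case: (inS h s j); rewrite //= neq_ltn.
Qed.

Lemma dix_take h s g j : inS h (take g s) j -> dix h (take g s) j = dix h s j.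
Proof. exact: index_take. Qed.

Lemma dix_lt h s j : inS h s j -> dix h s j < size s.
Proof. by rewrite /dix index_mem. Qed.

Definition children (i : nat) := [seq i * l + t | t <- iota 0 l].

Lemma children_mem i k : (k \in children i) = (k %/ l == i).
Proof.
have l0 : 0 < l by apply: ltnW.
apply/mapP/eqP => [[t] |Ek].
  by rewrite mem_iota add0n => tl ->; rewrite divnMDl // divn_small // addn0.
exists (k %% l); first by rewrite mem_iota add0n ltn_mod.
by rewrite -Ek -divn_eq.
Qed.

Lemma children_uniq i : uniq (children i).
Proof.
rewrite map_inj_uniq ?iota_uniq //; exact: addnI.
Qed.

Lemma size_children i : size (children i) = l.
Proof. by rewrite size_map size_iota. Qed.

Lemma biS h j : bi h.+1 j = bi h j %/ l.
Proof. by rewrite /bi expnSr divnMA. Qed.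

Lemma inS_children h i j : inS h (children i) j = inS h.+1 [:: i] j.
Proof. by rewrite /inS children_mem biS inE. Qed.


Inductive task :=
| T0 of nat & seq nat & nat
| T1 of nat & seq nat & nat & nat
| T2 of nat & seq nat & nat & nat
| T3 of nat & seq nat & nat & nat.

Definition th t := match t with T0 h _ _ | T1 h _ _ _ | T2 h _ _ _ | T3 h _ _ _ => h end.
Definition ts t := match t with T0 _ s _ | T1 _ s _ _ | T2 _ s _ _ | T3 _ s _ _ => s end.

Definition cons_t t (x : tvec N) : Prop :=
  match t with
  | T0 h s m => minS h s x = Some m
  | T1 h s m r => minS h s x = Some m /\ digS h s x = Some r
  | T2 h s m r => [/\ minS h s x = Some m, digS h s x = Some r &
                      minS h (sX s (r - m)) x = Some m]
  | T3 h s m r => [/\ minS h s x = Some m, digS h s x = Some r,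
                      minS h (sX s (r - m)) x = Some m &
                      minS h (take (r - m).+1 s) x = Some m]
  end.

Definition mk0 h s m :=
  match s with
  | [:: i] => match h with 0 => T0 0 [:: i] m | h'.+1 => T0 h' (children i) m end
  | _ => T0 h s m
  end.
Definition mk1 h s m r := if size s <= 1 then mk0 h s m else T1 h s m r.

Definition query t : trow N :=
  match t with
  | T0 h s _ => drow h s
  | T1 h s m r => zrow h (sX s (r - m))
  | T2 h s m r => zrow h (take (r - m).+1 s)
  | T3 h s m r => zrow h (take (r - m) s)
  end.

Definition trans t (a : trop) : seq task :=
  match t with
  | T0 h s m => if a is Some r then [:: mk1 h s m r] else [::]
  | T1 h s m r => let g := r - m in
      if a is Some s' then
        (if m < s' then [:: mk0 h [:: nth 0 s g] m; mk0 h (sX s g) s'] else [:: T2 h s m r])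
      else [:: mk0 h [:: nth 0 s g] m]
  | T2 h s m r => let g := r - m in
      if a is Some u then
        (if m < u then [:: mk1 h (take g.+1 s) u r; mk0 h (drop g.+1 s) m]
         else if g == 0 then [:: mk0 h [:: nth 0 s g] m; mk0 h (drop g.+1 s) m]
         else [:: T3 h s m r])
      else [::]
  | T3 h s m r => let g := r - m in
      if a is Some v then [:: mk0 h [:: nth 0 s g] m; mk0 h (take g s) v; mk0 h (drop g.+1 s) m]
      else [:: mk0 h [:: nth 0 s g] m; mk0 h (drop g.+1 s) m]
  end.

Definition isdone t := if t is T0 0 [:: _] _ then true else false.

Definition wf t : bool :=
  match t with
  | T0 h s m => [&& uniq s, size s <= l & (size s == 1) ==> (h == 0)]
  | T1 h s _ _ | T2 h s _ _ | T3 h s _ _ => [&& uniq s, 1 < size s & size s <= l]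
  end.

Definition E h i (x : tvec N) := #|[pred j : 'I_N | (bi h j == i) && (x j != None)]|.
Definition ne h i x := 0 < E h i x.
Definition cnt h s x := count (fun i => ne h i x) s.
Fixpoint Pot h i x : nat :=
  match h with
  | 0 => 0
  | h'.+1 => if ne h'.+1 i x then 4 * cnt h' (children i) x - 2 + \sum_(k <- children i) Pot h' k x
             else 0
  end.
Definition SP h s x := \sum_(k <- s) Pot h k x.
Definition F0 h s x := (if size s <= 1 then 0 else 4 * cnt h s x - 2) + SP h s x.
Definition F1 h s x := (if size s <= 1 then 0 else 4 * cnt h s x - 3) + SP h s x.

Definition phi t x :=
  match t with
  | T0 h s _ => F0 h s x
  | T1 h s _ _ => F1 h s x
  | T2 h s _ _ => 4 * cnt h s x - 4 + SP h s x
  | T3 h s _ _ => 4 * cnt h s x - 5 + SP h s x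
  end.

Lemma neP h i x : reflect (exists j, bi h j = i /\ x j <> None) (ne h i x).
Proof.
apply: (iffP card_gt0P) => [[j]|[j [Ej Nj]]].
  by rewrite inE => /andP [/eqP Ej /eqP Nj]; exists j.
by exists j; rewrite inE Ej eqxx; apply/eqP.
Qed.

Lemma minS_ne h s x w : minS h s x = Some w -> exists2 i, i \in s & ne h i x.
Proof.
move/bmin_ex => [j [Hj xj]]; exists (bi h j) => //.
by apply/neP; exists j; rewrite xj.
Qed.

Lemma minS_cnt h s x w : minS h s x = Some w -> 0 < cnt h s x.
Proof. by move/minS_ne => [i Hi Hn]; rewrite -has_count; apply/hasP; exists i. Qed.

Lemma minS_None_ne h s x : minS h s x = None -> forall i, i \in s -> ~~ ne h i x.
Proof.
move/bmin_None => H i Hi; apply/negP => /neP [j [Ej Nj]]; apply: Nj.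
by apply: H; rewrite /inS Ej.
Qed.

Lemma Pot_empty h i x : ~~ ne h i x -> Pot h i x = 0.
Proof. by case: h => //= h /negbTE ->. Qed.

Lemma minS_None_cnt h s x : minS h s x = None -> cnt h s x = 0 /\ SP h s x = 0.
Proof.
move=> H; have N0 := minS_None_ne H; split.
  by apply/eqP; rewrite -leqn0 leqNgt -has_count; apply/hasP => [[i Hi Hn]]; by move: (N0 i Hi); rewrite Hn.
by rewrite /SP big1_seq // => i /andP [_ Hi]; apply: Pot_empty; apply: N0.
Qed.

Lemma minS_single_ne h i x w : minS h [:: i] x = Some w -> ne h i x.
Proof. by move/minS_ne => [k]; rewrite inE => /eqP ->. Qed.

Lemma minS_children h i x : minS h (children i) x = minS h.+1 [:: i] x.
Proof. by apply: bmin_ext => // j; rewrite inS_children. Qed.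

Lemma cons_mk0 h s m x : cons_t (mk0 h s m) x <-> minS h s x = Some m.
Proof. by case: s => [|i [|k s]] //=; case: h => //= h; rewrite minS_children. Qed.

Lemma cons_mk1 h s m r x : minS h s x = Some m -> digS h s x = Some r -> cons_t (mk1 h s m r) x.
Proof. by rewrite /mk1; case: ifP => _ /=; [rewrite cons_mk0|split]. Qed.

Lemma F0_single h i x : F0 h [:: i] x = Pot h i x.
Proof. by rewrite /F0 /SP /= big_cons big_nil addn0. Qed.

Lemma phi_mk0 h s m x : minS h s x = Some m -> phi (mk0 h s m) x = F0 h s x.
Proof.
case: s => [|i [|k s]] //= H; case: h H => [|h] H //=.
rewrite F0_single /= (minS_single_ne H) /F0 size_children.
by case: l hl => [|[|l']].
Qed.

Lemma phi_mk1 h s m r x : minS h s x = Some m -> phi (mk1 h s m r) x = F1 h s x.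
Proof.
rewrite /mk1; case: ifP => // s1 H; rewrite phi_mk0 // /F0 /F1 s1 //.
Qed.

Lemma wf_mk0 h s m : uniq s -> size s <= l -> wf (mk0 h s m).
Proof.
case: s => [|i [|k s]].
- by [].
- case: h => [|h] /= _ _; first by rewrite (ltnW hl).
  rewrite children_uniq size_children leqnn /=.
  by apply/implyP => /eqP E; move: hl; rewrite E.
- by move=> u sl; apply/and3P; split.
Qed.

Lemma wf_mk1 h s m r : uniq s -> size s <= l -> wf (mk1 h s m r).
Proof.
rewrite /mk1; case: ifP => [_|]; first exact: wf_mk0.
by move=> /negbT; rewrite -ltnNge /= => -> -> ->.
Qed.


Fixpoint AllT (c : seq task) x : Prop :=
  match c with [::] => True | t :: c' => cons_t t x /\ AllT c' x end.

Lemma AllT_cat c1 c2 x : AllT (c1 ++ c2) x <-> AllT c1 x /\ AllT c2 x.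
Proof. by elim: c1 => [|t c IH] /=; [tauto|rewrite IH; tauto]. Qed.

Definition covt t j := inS (th t) (ts t) j.

Lemma cov_mk0 h s m j : covt (mk0 h s m) j = inS h s j.
Proof. by case: s => [|i [|k s]] //=; case: h => //= h; rewrite /covt /= inS_children. Qed.

Lemma cov_mk1 h s m r j : covt (mk1 h s m r) j = inS h s j.
Proof. by rewrite /mk1; case: ifP => _; rewrite ?cov_mk0. Qed.

Lemma cnt_cat h s1 s2 x : cnt h (s1 ++ s2) x = cnt h s1 x + cnt h s2 x.
Proof. exact: count_cat. Qed.
Lemma SP_cat h s1 s2 x : SP h (s1 ++ s2) x = SP h s1 x + SP h s2 x.
Proof. exact: big_cat. Qed.

Lemma cnt_dec h s g x : g < size s ->
  cnt h s x = cnt h (take g s) x + ne h (nth 0 s g) x + cnt h (drop g.+1 s) x.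
Proof. by move=> gs; rewrite {1}(decomp_s 0 gs) cnt_cat /= /cnt addnA. Qed.
Lemma SP_dec h s g x : g < size s ->
  SP h s x = SP h (take g s) x + Pot h (nth 0 s g) x + SP h (drop g.+1 s) x.
Proof. by move=> gs; rewrite {1}(decomp_s 0 gs) SP_cat /SP big_cons addnA. Qed.

Lemma F0_le h s x : 0 < cnt h s x -> F0 h s x <= 4 * cnt h s x - 2 + SP h s x.
Proof. rewrite /F0; case: ifP => // _ c; rewrite leq_add2r; lia. Qed.
Lemma F1_le h s x : 0 < cnt h s x -> F1 h s x <= 4 * cnt h s x - 3 + SP h s x.
Proof. rewrite /F1; case: ifP => // _ c; rewrite leq_add2r; lia. Qed.

Section Facts.
Variables (h : nat) (s : seq nat) (m r : nat) (x : tvec N).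
Hypotheses (Hm : minS h s x = Some m) (Hr : digS h s x = Some r).

Lemma f_lb j v : inS h s j -> x j = Some v -> m <= v.
Proof. exact: bmin_lbS Hm. Qed.

Lemma f_dlb j v : inS h s j -> x j = Some v -> r <= dix h s j + v.
Proof. by move=> Hj xj; apply: (bmin_lbS Hr Hj); rewrite xj. Qed.

Lemma f_att : exists j v, [/\ inS h s j, x j = Some v & dix h s j + v = r].
Proof.
have [j [Hj E]] := bmin_ex Hr; move: E; case xj: (x j) => [v|] //= [E].
by exists j, v.
Qed.

Lemma f_mr : m <= r.
Proof. have [j [v [Hj xj <-]]] := f_att; have := f_lb Hj xj; lia. Qed.

Lemma f_att_g j v : inS h s j -> x j = Some v -> dix h s j + v = r -> dix h s j <= r - m.
Proof. move=> Hj xj E; have := f_lb Hj xj; lia. Qed.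

Lemma f_min_g z : inS h s z -> x z = Some m -> r - m <= dix h s z.
Proof. move=> Hz xz; have := f_dlb Hz xz; lia. Qed.

Lemma f_minw : exists z, inS h s z /\ x z = Some m.
Proof. exact: bmin_ex Hm. Qed.

Lemma f_gs : r - m < size s.
Proof.
have [z [Hz xz]] := f_minw; apply: leq_ltn_trans (f_min_g Hz xz) _; exact: dix_lt.
Qed.

End Facts.

Lemma minS_dig h s m x : minS h s x = Some m -> exists r, digS h s x = Some r.
Proof.
move=> Hm; case E: (digS h s x) => [r|]; first by exists r.
have [z [Hz xz]] := bmin_ex Hm; move/bmin_None: E => /(_ z Hz); by rewrite xz.
Qed.

Definition stepOK t x : Prop :=
  let a := row_apply (query t) x in
  [/\ all wf (trans t a), AllT (trans t a) x,
      (forall j, inS (th t) (ts t) j -> x j != None -> has (fun t' => covt t' j) (trans t a)) &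
      \sum_(t' <- trans t a) phi t' x < phi t x].

Lemma minS_nil h x : minS h [::] x = None.
Proof. by apply/bmin_None. Qed.

Lemma step0 h s m x : wf (T0 h s m) -> ~~ isdone (T0 h s m) -> cons_t (T0 h s m) x ->
  stepOK (T0 h s m) x.
Proof.
move=> /and3P [us sl s1] nd /= Hm.
have sz : 1 < size s.
  case: s us sl s1 nd Hm => [|i [|k s]] //=; first by rewrite minS_nil.
  by case: h.
have [r Hr] := minS_dig Hm.
rewrite /stepOK /= drowE Hr /mk1 leqNgt sz /= big_cons big_nil addn0.
have c1 := minS_cnt Hm.
split => //=; first by rewrite us sz sl.
- by move=> j Hj _; rewrite /= orbF.
- have s1f : (size s <= 1) = false by rewrite leqNgt sz.
  rewrite /F1 /F0 s1f; lia.
Qed.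

Lemma sX_subseq (s : seq nat) g : subseq (sX s g) s.
Proof.
rewrite /sX -{3}(cat_take_drop g s); apply: cat_subseq => //.
by rewrite -add1n -drop_drop drop_subseq.
Qed.

Lemma uniq_sX s g : uniq s -> uniq (sX s g).
Proof. exact/subseq_uniq/sX_subseq. Qed.
Lemma size_sX s g : size (sX s g) <= size s.
Proof. exact/size_subseq/sX_subseq. Qed.
Lemma size_take_le s g : size (take g s) <= size s.
Proof. exact/size_subseq/take_subseq. Qed.
Lemma size_drop_le s g : size (drop g s) <= size s.
Proof. exact/size_subseq/drop_subseq. Qed.

Section Sub.
Variables (h : nat) (s s' : seq nat) (Q : pred nat) (x : tvec N).
Hypothesis HQ : forall j, inS h s' j = inS h s j && Q (dix h s j).

Lemma msub_Some w : (exists z, [/\ inS h s z, Q (dix h s z) & x z = Some w]) ->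
  (forall j v, inS h s j -> Q (dix h s j) -> x j = Some v -> w <= v) -> minS h s' x = Some w.
Proof.
move=> [z [Hz Qz xz]] H; apply: bmin_Some; first by exists z; rewrite HQ Hz Qz.
by move=> j v; rewrite HQ => /andP [Hj Qj]; apply: H.
Qed.

Lemma msub_None : (forall j, inS h s j -> Q (dix h s j) -> x j = None) -> minS h s' x = None.
Proof. by move=> H; apply/bmin_None => j; rewrite HQ => /andP [Hj Qj]; apply: H. Qed.

Lemma msub_lb w j v : minS h s' x = Some w -> inS h s j -> Q (dix h s j) -> x j = Some v -> w <= v.
Proof. by move=> E Hj Qj; apply: (bmin_lbS E); rewrite HQ Hj. Qed.

Lemma msub_ex w : minS h s' x = Some w -> exists z, [/\ inS h s z, Q (dix h s z) & x z = Some w].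
Proof. by move/bmin_ex => [z [Hz xz]]; move: Hz; rewrite HQ => /andP [? ?]; exists z. Qed.

Lemma msub_None' j : minS h s' x = None -> inS h s j -> Q (dix h s j) -> x j = None.
Proof. by move/bmin_None => H Hj Qj; apply: H; rewrite HQ Hj. Qed.
End Sub.

Lemma inS_dropS h s g j : uniq s -> inS h (drop g.+1 s) j = inS h s j && (g < dix h s j).
Proof. exact: inS_drop. Qed.

Lemma hasC (T : Type) (a : pred T) y (s : seq T) : has a (y :: s) = a y || has a s.
Proof. by []. Qed.
Lemma hasN (T : Type) (a : pred T) : has a [::] = false.
Proof. by []. Qed.

Lemma wf_mk0_1 h i m : wf (mk0 h [:: i] m).
Proof. by apply: wf_mk0 => //=; apply: ltnW. Qed.

Lemma all1 a : wf a -> all wf [:: a].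
Proof. by rewrite /= andbT. Qed.
Lemma all2 a b : wf a -> wf b -> all wf [:: a; b].
Proof. by move=> /= -> ->. Qed.
Lemma all3 a b c : wf a -> wf b -> wf c -> all wf [:: a; b; c].
Proof. by move=> /= -> -> ->. Qed.

Lemma step1 h s m r x : wf (T1 h s m r) -> cons_t (T1 h s m r) x -> stepOK (T1 h s m r) x.
Proof.
move=> /and3P [us sz sl] /= [Hm Hr].
set g := r - m.
have gs : g < size s := f_gs Hm Hr.
pose QB := fun k => k == g. pose QX := fun k => k != g.
pose QL := fun k => k < g. pose QR := fun k => g < k.
have HB : forall j, inS h [:: nth 0 s g] j = inS h s j && QB (dix h s j).
  by move=> j; apply: inS_nth.
have HX : forall j, inS h (sX s g) j = inS h s j && QX (dix h s j).
  by move=> j; apply: inS_sX.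
have HL : forall j, inS h (take g s) j = inS h s j && QL (dix h s j).
  by move=> j; apply: inS_take.
have HR : forall j, inS h (drop g.+1 s) j = inS h s j && QR (dix h s j).
  by move=> j; apply: inS_dropS.
have c1 := minS_cnt Hm.
rewrite /stepOK; cbn [trans query phi th ts]; rewrite zrowE -/g.
have [bz [Hbz xbz]] := f_minw Hm.
have Pdec := SP_dec h x gs; have Cdec := cnt_dec h x gs.
have s1f : (size s <= 1) = false by rewrite leqNgt sz.
rewrite /F1 s1f.
case E: (minS h (sX s g) x) => [s'|].
- have Hsm : m <= s'.
    have [z [Hz _ xz]] := msub_ex HX E. have := f_lb Hm Hz; apply; exact: xz.
  case: ltnP => ms.
  + have EB : minS h [:: nth 0 s g] x = Some m.
      apply: (msub_Some HB).
        exists bz; split => //; apply/negPn/negP => ne'.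
        by have := msub_lb HX E Hbz ne' xbz; rewrite leqNgt ms.
      by move=> j v Hj _ xj; exact (f_lb Hm Hj xj).
    have cX := minS_cnt E.
    have nB := minS_single_ne EB.
    split.
    * apply: all2; first exact: wf_mk0_1.
      by apply: wf_mk0; [exact: uniq_sX | apply: leq_trans (size_sX _ _) sl].
    * by split; [apply/cons_mk0 | split => //; apply/cons_mk0].
    * move=> j Hj _; rewrite !hasC hasN !cov_mk0 HB HX Hj /QB /QX /=.
      by case: (dix h s j == g).
    * rewrite big_cons big_cons big_nil addn0 !phi_mk0 // F0_single.
      have := F0_le cX; rewrite /sX cnt_cat SP_cat in cX * => F0X.
      rewrite Cdec Pdec nB; change (nat_of_bool true) with 1; lia.
  + have Es : s' = m by apply/eqP; rewrite eqn_leq ms Hsm.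
    subst s'.
    split => //=.
    * by rewrite us sz sl.
    * by move=> j Hj _; rewrite orbF.
    * rewrite big_cons big_nil addn0 /=; lia.
- have EB : minS h [:: nth 0 s g] x = Some m.
    apply: (msub_Some HB).
      exists bz; split => //; apply/negPn/negP => ne'.
      by rewrite (msub_None' HX E Hbz ne') in xbz.
    by move=> j v Hj _ xj; exact (f_lb Hm Hj xj).
  have EL : minS h (take g s) x = None.
    apply: (msub_None HL) => j Hj lt; apply: (msub_None' HX E Hj); move: lt; rewrite /QL /QX neq_ltn => -> //.
  have ER : minS h (drop g.+1 s) x = None.
    apply: (msub_None HR) => j Hj lt; apply: (msub_None' HX E Hj); move: lt; rewrite /QR /QX neq_ltn => ->; by rewrite orbT.
  have [cL PL] := minS_None_cnt EL; have [cR PR] := minS_None_cnt ER.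
  have nB := minS_single_ne EB.
  split.
  + by apply: all1; apply: wf_mk0_1.
  + by split => //; apply/cons_mk0.
  + move=> j Hj xj; rewrite hasC hasN cov_mk0 HB Hj /QB /= orbF; apply/negPn/negP => ne'.
    by rewrite (msub_None' HX E Hj ne') in xj.
  + rewrite big_cons big_nil addn0 phi_mk0 // F0_single.
    rewrite Cdec Pdec cL PL cR PR nB; change (nat_of_bool true) with 1; lia.
Qed.

Section Facts2.
Variables (h : nat) (s : seq nat) (m r : nat) (x : tvec N).
Hypotheses (us : uniq s) (Hm : minS h s x = Some m) (Hr : digS h s x = Some r).
Let g := r - m.

Lemma HB_ j : inS h [:: nth 0 s g] j = inS h s j && (fun k => k == g) (dix h s j).
Proof. by apply: inS_nth => //; apply: f_gs Hm Hr. Qed.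
Lemma HX_ j : inS h (sX s g) j = inS h s j && (fun k => k != g) (dix h s j).
Proof. exact: inS_sX. Qed.
Lemma HL_ j : inS h (take g s) j = inS h s j && (fun k => k < g) (dix h s j).
Proof. exact: inS_take. Qed.
Lemma HLe_ j : inS h (take g.+1 s) j = inS h s j && (fun k => k < g.+1) (dix h s j).
Proof. exact: inS_take. Qed.
Lemma HR_ j : inS h (drop g.+1 s) j = inS h s j && (fun k => g < k) (dix h s j).
Proof. exact: inS_dropS. Qed.

Lemma f_EB : (exists z, [/\ inS h s z, dix h s z <= g & x z = Some m]) ->
  minS h [:: nth 0 s g] x = Some m.
Proof.
move=> [z [Hz dz xz]]; apply: (msub_Some HB_).
  exists z; split => //=; rewrite eqn_leq dz /=; exact (f_min_g Hr Hz xz).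
by move=> j v Hj _ xj; exact (f_lb Hm Hj xj).
Qed.

Lemma f_ER : minS h (sX s g) x = Some m -> minS h (drop g.+1 s) x = Some m.
Proof.
move=> Hs; have [z [Hz dz xz]] := msub_ex HX_ Hs.
apply: (msub_Some HR_).
  exists z; split => //=; rewrite ltn_neqAle eq_sym dz /=; exact (f_min_g Hr Hz xz).
by move=> j v Hj _ xj; exact (f_lb Hm Hj xj).
Qed.

Lemma f_digtake : digS h (take g.+1 s) x = Some r.
Proof.
have [j [v [Hj xj dj]]] := f_att Hr.
have djg := f_att_g Hm Hj xj dj.
have Hjt : inS h (take g.+1 s) j by rewrite HLe_ Hj /=.
apply: bmin_Some.
  by exists j; split => //; rewrite dix_take // xj /= dj.
move=> i w Hi; rewrite dix_take //; case xi: (x i) => [u|] //= [<-].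
move: Hi; rewrite HLe_ => /andP [His _]; exact (f_dlb Hr His xi).
Qed.

End Facts2.

Lemma cnt_take_drop h s n x : cnt h s x = cnt h (take n s) x + cnt h (drop n s) x.
Proof. by rewrite -cnt_cat cat_take_drop. Qed.
Lemma SP_take_drop h s n x : SP h s x = SP h (take n s) x + SP h (drop n s) x.
Proof. by rewrite -SP_cat cat_take_drop. Qed.

Lemma step2 h s m r x : wf (T2 h s m r) -> cons_t (T2 h s m r) x -> stepOK (T2 h s m r) x.
Proof.
move=> /and3P [us sz sl] /= [Hm Hr Hs].
set g := r - m.
have gs : g < size s := f_gs Hm Hr.
pose QB := fun k => k == g. pose QX := fun k => k != g.
pose QLe := fun k => k < g.+1. pose QR := fun k => g < k.
have HB : forall j, inS h [:: nth 0 s g] j = inS h s j && QB (dix h s j) := HB_ us Hm Hr.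
have HX : forall j, inS h (sX s g) j = inS h s j && QX (dix h s j) := HX_ h m r us.
have HLe : forall j, inS h (take g.+1 s) j = inS h s j && QLe (dix h s j) := HLe_ h s m r.
have HR : forall j, inS h (drop g.+1 s) j = inS h s j && QR (dix h s j) := HR_ h m r us.
have c1 := minS_cnt Hm.
have ER : minS h (drop g.+1 s) x = Some m := f_ER us Hm Hr Hs.
have cR := minS_cnt ER.
rewrite /stepOK; cbn [trans query phi th ts]; rewrite zrowE -/g.
have Pdec := SP_dec h x gs; have Cdec := cnt_dec h x gs.
have [aj [av [Haj xaj daj]]] := f_att Hr.
have dajg := f_att_g Hm Haj xaj daj.
case E: (minS h (take g.+1 s) x) => [u|]; last first.
  by have := msub_None' HLe E Haj; rewrite /QLe ltnS dajg xaj => /(_ isT).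
have [z [Hz Qz xz]] := msub_ex HLe E.
have mu : m <= u := f_lb Hm Hz xz.
case: ltnP => mu'.
- have cT := minS_cnt E.
  split.
  + apply: all2; first by apply: wf_mk1; [exact: take_uniq | apply: leq_trans (size_take_le _ _) sl].
    by apply: wf_mk0; [exact: drop_uniq | apply: leq_trans (size_drop_le _ _) sl].
  + split; first by apply: cons_mk1 => //; exact: f_digtake.
    by split => //; apply/cons_mk0.
  + move=> j Hj _; rewrite !hasC hasN cov_mk1 cov_mk0 HLe HR Hj /QLe /QR /=.
    by case: ltnP.
  + rewrite big_cons big_cons big_nil addn0 phi_mk1 // phi_mk0 //.
    have := F1_le cT; have := F0_le cR.
    rewrite (cnt_take_drop h s g.+1) (SP_take_drop h s g.+1); lia.
- have um : u = m by apply/eqP; rewrite eqn_leq mu mu'.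
  subst u.
  have EB : minS h [:: nth 0 s g] x = Some m by apply: (f_EB us Hm Hr); exists z.
  have nB := minS_single_ne EB.
  case: eqP => g0.
  + have cL0 : cnt h (take g s) x = 0 by rewrite g0 take0.
    have PL0 : SP h (take g s) x = 0 by rewrite g0 take0 /SP big_nil.
    split.
    * apply: all2; first exact: wf_mk0_1.
      by apply: wf_mk0; [exact: drop_uniq | apply: leq_trans (size_drop_le _ _) sl].
    * by split; [apply/cons_mk0 | split => //; apply/cons_mk0].
    * move=> j Hj _; rewrite !hasC hasN !cov_mk0 HB HR Hj /QB /QR /= g0.
      by case: (dix h s j).
    * rewrite big_cons big_cons big_nil addn0 !phi_mk0 // F0_single.
      have := F0_le cR.
      rewrite Cdec Pdec nB cL0 PL0; change (nat_of_bool true) with 1; lia.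
  + split.
    * by rewrite /= us sz sl.
    * by split => //; split.
    * by move=> j Hj _; rewrite /= orbF; exact: Hj.
    * rewrite big_cons big_nil addn0; cbn [phi].
      rewrite Cdec nB; change (nat_of_bool true) with 1; lia.
Qed.

Lemma step3 h s m r x : wf (T3 h s m r) -> cons_t (T3 h s m r) x -> stepOK (T3 h s m r) x.
Proof.
move=> /and3P [us sz sl] /= [Hm Hr Hs Hu].
set g := r - m.
have gs : g < size s := f_gs Hm Hr.
pose QB := fun k => k == g. pose QL := fun k => k < g.
pose QLe := fun k => k < g.+1. pose QR := fun k => g < k.
have HB : forall j, inS h [:: nth 0 s g] j = inS h s j && QB (dix h s j) := HB_ us Hm Hr.
have HL : forall j, inS h (take g s) j = inS h s j && QL (dix h s j) := HL_ h s m r.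
have HLe : forall j, inS h (take g.+1 s) j = inS h s j && QLe (dix h s j) := HLe_ h s m r.
have HR : forall j, inS h (drop g.+1 s) j = inS h s j && QR (dix h s j) := HR_ h m r us.
have ER : minS h (drop g.+1 s) x = Some m := f_ER us Hm Hr Hs.
have cR := minS_cnt ER.
have [z [Hz Qz xz]] := msub_ex HLe Hu.
have EB : minS h [:: nth 0 s g] x = Some m by apply: (f_EB us Hm Hr); exists z.
have nB := minS_single_ne EB.
rewrite /stepOK; cbn [trans query phi th ts]; rewrite zrowE -/g.
have Pdec := SP_dec h x gs; have Cdec := cnt_dec h x gs.
case E: (minS h (take g s) x) => [v|].
- have cL := minS_cnt E.
  split.
  + apply: all3; first exact: wf_mk0_1.
      by apply: wf_mk0; [exact: take_uniq | apply: leq_trans (size_take_le _ _) sl].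
    by apply: wf_mk0; [exact: drop_uniq | apply: leq_trans (size_drop_le _ _) sl].
  + by split; [apply/cons_mk0 | split; [apply/cons_mk0 | split => //; apply/cons_mk0]].
  + move=> j Hj _; rewrite !hasC hasN !cov_mk0 HB HL HR Hj /QB /QL /QR /=.
    by case: ltngtP.
  + rewrite !big_cons big_nil addn0 !phi_mk0 // F0_single.
    have := F0_le cR; have := F0_le cL.
    rewrite Cdec Pdec nB; change (nat_of_bool true) with 1; lia.
- have [cL0 PL0] := minS_None_cnt E.
  split.
  + apply: all2; first exact: wf_mk0_1.
    by apply: wf_mk0; [exact: drop_uniq | apply: leq_trans (size_drop_le _ _) sl].
  + by split; [apply/cons_mk0 | split => //; apply/cons_mk0].
  + move=> j Hj xj; rewrite !hasC hasN !cov_mk0 HB HR Hj /QB /QR /=.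
    case: ltngtP => // lt.
    have := msub_None' HL E Hj; rewrite /QL lt => /(_ isT) xN.
    by rewrite xN in xj.
  + rewrite !big_cons big_nil addn0 !phi_mk0 // F0_single.
    have := F0_le cR.
    rewrite Cdec Pdec nB cL0 PL0; change (nat_of_bool true) with 1; lia.
Qed.

Lemma step t x : wf t -> ~~ isdone t -> cons_t t x -> stepOK t x.
Proof.
case: t => [h s m|h s m r|h s m r|h s m r] w nd c.
- exact: step0.
- exact: step1.
- exact: step2.
- exact: step3.
Qed.

Lemma okq_query t : wf t -> okq l (query t).
Proof.
case: t => [h s m|h s m r|h s m r|h s m r] /= w; rewrite ?okq_zrow //.
by apply: okq_drow; case/and3P: w.
Qed.

Definition CONS cfg x := AllT cfg x /\ (forall j, ~~ has (covt^~ j) cfg -> x j = None).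
Definition Phi cfg x := \sum_(t <- cfg) phi t x.

Lemma done_uniq cfg x y : all isdone cfg -> CONS cfg x -> CONS cfg y -> x = y.
Proof.
move=> D [Ax Cx] [Ay Cy]; apply/ffunP => j.
case H: (has (covt^~ j) cfg); last first.
  by rewrite Cx ?H // Cy ?H.
elim: cfg D Ax Ay H {Cx Cy} => [|t c IH] //= /andP [dt dc] [tx cx] [ty cy].
case Ht: (covt t j) => /= H; last exact: IH.
move: dt tx ty Ht; case: t => // [[|h] [|i [|k s]] m] //= _ tx ty Ht.
have key : forall z : tvec N, minS 0 [:: i] z = Some m -> z j = Some m.
  move=> z /bmin_ex [j' [Hj' zj']].
  suff -> : j = j' by [].
  apply: val_inj; move: Ht Hj'; rewrite /covt /= /inS /bi !inE expn0 !divn1.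
  by move=> /eqP -> /eqP ->.
by rewrite (key _ tx) (key _ ty).
Qed.

Lemma split_notdone cfg : ~~ all isdone cfg ->
  exists pre t post, cfg = pre ++ t :: post /\ ~~ isdone t.
Proof.
elim: cfg => [|t c IH] //=; rewrite negb_and; case: (boolP (isdone t)) => /= dt H.
  have [pre [t' [post [-> nd]]]] := IH H; by exists (t :: pre), t', post.
by exists [::], t, c.
Qed.

Lemma Phi_cat c1 c2 x : Phi (c1 ++ c2) x = Phi c1 x + Phi c2 x.
Proof. exact: big_cat. Qed.

Lemma key_good n cfg : all wf cfg -> Good l n (fun x => CONS cfg x /\ Phi cfg x <= n).
Proof.
elim: n cfg => [|n IH] cfg wcfg.
  case: (boolP (all isdone cfg)) => [D|ND].
    by move=> x y [Cx _] [Cy _]; exact: done_uniq D Cx Cy.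
  have [pre [t [post [Ec nd]]]] := split_notdone ND.
  move=> x y [[Ax _] Px]; exfalso.
  move: Ax Px; rewrite Ec Phi_cat /Phi big_cons => /AllT_cat [_ [ct _]].
  have wt : wf t by move: wcfg; rewrite Ec all_cat /= => /and3P [_ ->].
  have [_ _ _ lt] := step wt nd ct.
  rewrite leqn0 !addn_eq0 => /and3P [_ /eqP pt _]; by rewrite pt in lt.
case: (boolP (all isdone cfg)) => [D|ND].
  by apply: Good_uniq => x y [Cx _] [Cy _]; exact: done_uniq D Cx Cy.
have [pre [t [post [Ec nd]]]] := split_notdone ND.
have wt : wf t by move: wcfg; rewrite Ec all_cat /= => /and3P [_ ->].
exists (query t); split; first exact: okq_query.
move=> a.
case: (classic (exists x0, (CONS cfg x0 /\ Phi cfg x0 <= n.+1) /\ row_apply (query t) x0 = a))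
  => [[x0 [[[A0 _] _] E0]]|NE]; last first.
  by apply: Good_uniq => x y Hx; exfalso; apply: NE; exists x.
have ct0 : cons_t t x0 by move: A0; rewrite Ec => /AllT_cat [_ [ct _]].
have [w0 _ _ _] := step wt nd ct0.
rewrite E0 in w0.
have wcfg' : all wf (pre ++ trans t a ++ post).
  by move: wcfg; rewrite Ec !all_cat /= => /and3P [-> _ ->]; rewrite w0.
apply: Good_mono (IH _ wcfg') => x [[[Ax Cx] Px] Ex].
move: Ax; rewrite Ec => /AllT_cat [Apre [ct Apost]].
have [_ At Cov Lt] := step wt nd ct.
rewrite Ex in At Cov Lt.
split; first split.
- by apply/AllT_cat; split => //; apply/AllT_cat.
- move=> j; rewrite !has_cat negb_or => /andP [npre /norP [ntr npost]].
  case: (boolP (covt t j)) => ct'.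
    apply/eqP/negPn/negP => nN; move/negP: ntr; apply; exact: Cov ct' nN.
  by apply: Cx; rewrite Ec has_cat /= negb_or npre /= negb_or ct' npost.
- move: Px; rewrite Ec !Phi_cat /Phi big_cons; lia.
Qed.

Lemma sum_count (q : pred nat) (s : seq nat) : \sum_(k <- s) (q k : nat) = count q s.
Proof. by elim: s => [|a s IH]; rewrite ?big_nil ?big_cons ?IH. Qed.

Lemma card_sum (A : pred 'I_N) : #|A| = \sum_(j : 'I_N) (A j : nat).
Proof. rewrite -sum1_card big_mkcond; apply: eq_bigr => j _. by rewrite -topredE /=; case: (A j). Qed.

Lemma E_children h i x : E h.+1 i x = \sum_(k <- children i) E h k x.
Proof.
rewrite /E card_sum.
under eq_bigr => k _ do rewrite card_sum.
rewrite exchange_big; apply: eq_bigr => j _ /=.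
case: (x j != None); last by rewrite andbF big1_seq // => k _; rewrite andbF.
rewrite andbT; under eq_bigr => k _ do rewrite andbT.
under eq_bigr => k _ do rewrite eq_sym.
rewrite (sum_count (fun k => k == bi h j)) -/(count_mem (bi h j) _).
by rewrite count_uniq_mem ?children_uniq // children_mem biS.
Qed.

Lemma count_le_sum (f : nat -> nat) (s : seq nat) :
  count (fun k => 0 < f k) s <= \sum_(k <- s) f k.
Proof.
elim: s => [|a s IH]; rewrite ?big_nil ?big_cons //=.
by apply: leq_add => //; case: (f a).
Qed.

Lemma Pot_bound h i x : Pot h i x <= 4 * h * E h i x.
Proof.
elim: h i => [|h IH] i //=.
case: ifP => // _.
rewrite E_children.
have c := count_le_sum (fun k => E h k x) (children i).
have S : \sum_(k <- children i) Pot h k x <= \sum_(k <- children i) 4 * h * E h k x.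
  by apply: leq_sum => k _; apply: IH.
rewrite -big_distrr /= in S.
rewrite /cnt /ne.
move: c S; set A := \sum_(k <- _) E h k x; set B := \sum_(k <- _) Pot h k x.
set C := count _ _; lia.
Qed.

Lemma alg_good D : Good l (4 * D * up_log l N + 1) (fun x => nfinite x <= D).
Proof.
set L := up_log l N.
have NL : N <= l ^ L := up_logP N hl.
have bi0 : forall j : 'I_N, bi L j = 0.
  by move=> j; rewrite /bi divn_small // (leq_trans (ltn_ord j) NL).
rewrite addn1 /=; exists (zrow L [:: 0]); split; first exact: okq_zrow.
case=> [m|].
- apply: Good_mono (key_good (4 * D * L) (all1 (wf_mk0_1 L 0 m))) => x [Kx Ex].
  rewrite zrowE in Ex.
  split; first split.
  + by split => //; apply/cons_mk0.
  + by move=> j; rewrite hasC hasN cov_mk0 /inS bi0 inE eqxx.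
  + rewrite /Phi big_cons big_nil addn0 phi_mk0 // F0_single.
    apply: leq_trans (Pot_bound _ _ _) _.
    have -> : E L 0 x = nfinite x.
      by rewrite /E /nfinite; apply: eq_card => j; rewrite !inE bi0 eqxx.
    by rewrite -(mulnA 4 D) (mulnC D) mulnA leq_mul2l Kx orbT.
- apply: Good_uniq => x y [_ Ex] [_ Ey]; move: Ex Ey; rewrite !zrowE => Ex Ey.
  apply/ffunP => j; move/bmin_None: Ex => Ex; move/bmin_None: Ey => Ey.
  have Hj : inS L [:: 0] j by rewrite /inS bi0 inE.
  by rewrite Ex // Ey.
Qed.
End Alg.

Theorem mainTheorem18 (l N D : nat) :
  2 <= l -> 1 <= N ->
  let T := 4 * D * up_log l N + 1 in
  exists S : protocol N,
    is_tropical_protocol T T N D S /\ within_delay T N l S.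
Proof.
move=> hl _ T.
exists (@protoS N l (fun x => nfinite x <= D) T).
apply: proto_main => //.
exact: alg_good.
Qed.
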